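(* Let $R$ be a non-unital, non-associative ring, let $\sigma,\delta\colon R\to R$ be left $R$-additive maps, and let $\gamma$ be a ring endomorphism of $R$. Extend $\gamma$ homogeneously to $R[X;\sigma,\delta]$. Then this extended map is a ring endomorphism of $R[X;\sigma,\delta]$ if and only if $$\gamma(a)\cdot\pi_i^m(\gamma(b))=\gamma(a)\cdot\gamma(\pi_i^m(b))\quad\text{for all } i,m\in\mathbb{N}\text{ and } a,b\in R.$$
   Context: ''Non-associative'' means not necessarily associative and ''non-unital'' means not necessarily unital. $\mathbb{N}$ denotes the non-negative integers. A map $\beta\colon R\to R$ is left $R$-additive if $r\cdot\beta(s+t)=r\cdot(\beta(s)+\beta(t))$ for all $r,s,t\in R$. For $m\in\mathbb{N}$ and $0\le i\le m$, $\pi_i^m\colon R\to R$ denotes the sum of all $\binom{m}{i}$ compositions of $i$ copies of $\sigma$ and $m-i$ copies of $\delta$ in arbitrary order (so $\pi_0^0=\mathrm{id}_R$, e.g. $\pi_1^3=\sigma\delta\delta+\delta\sigma\delta+\delta\delta\sigma$), and $\pi_i^m:=0$ if $i<0$ or $i>m$. The non-unital, non-associative Ore extension $R[X;\sigma,\delta]$ is the set of formal sums $\sum_{i\in\mathbb{N}}a_iX^i$ with $a_i\in R$, finitely many nonzero, with coefficientwise addition and the distributive multiplication determined by $aX^m\cdot bX^n=\sum_{i\in\mathbb{N}}(a\cdot\pi_i^m(b))X^{i+n}$ for $a,b\in R$, $m,n\in\mathbb{N}$. $R$ is identified with $RX^0$. An additive map $\gamma\colon R\to R$ is extended homogeneously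 to $R[X;\sigma,\delta]$ by $\gamma\left(\sum_i a_iX^i\right):=\sum_i\gamma(a_i)X^i$. *)

(* Defs.v *)
(* A non-unital, non-associative ring is modelled as an
   abelian group R : zmodType with a biadditive multiplication mul. *)
From HB Require Import structures.
From mathcomp Require Import all_boot all_order all_algebra.
Set Implicit Arguments. Unset Strict Implicit. Unset Printing Implicit Defensive.
Import GRing.Theory.
Local Open Scope ring_scope.

Section Ore.
Variable R : zmodType.
Variable mul : R -> R -> R.
Variables sigma delta : R -> R.

(* opi m i b = sum over all words in {sigma,delta} of length m with exactly i
   letters sigma, of the corresponding composition applied to b
   (true = sigma, false = delta); empty sum (= 0) when i > m. *)
Definition word_map (w : seq bool) : R -> R :=
  foldr (fun (c : bool) (f : R -> R) => fun x => (if c then sigma else delta) (f x)) id w.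

Definition opi (m i : nat) (b : R) : R :=
  \sum_(w : m.-tuple bool | count id w == i) word_map w b.

(* Elements of R[X;sigma,delta]: coefficient lists (a_0; a_1; ...), with
   finitely many nonzero coefficients; equality is compared coefficientwise
   (via ocoef), so trailing zeros are irrelevant. *)
Definition opoly := seq R.
Definition ocoef (p : opoly) (k : nat) : R := nth 0 p k.

Definition oadd (p q : opoly) : opoly :=
  mkseq (fun k => ocoef p k + ocoef q k) (maxn (size p) (size q)).

(* (sum_m a_m X^m)(sum_n b_n X^n) = sum_{m,n} sum_i (a_m . pi_i^m(b_n)) X^(i+n) *)
Definition omul (p q : opoly) : opoly :=
  mkseq (fun k => \sum_(m < size p) \sum_(n < size q) \sum_(i < m.+1 | (i + n)%N == k)
                    mul (ocoef p m) (opi m i (ocoef q n)))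
        (size p + size q).

End Ore.

Definition oext (R : zmodType) (g : R -> R) (p : opoly R) : opoly R := map g p.

Definition left_R_additive (R : zmodType) (mul : R -> R -> R) (f : R -> R) :=
  forall r s t : R, mul r (f (s + t)) = mul r (f s + f t).

Definition ring_endo (R : zmodType) (mul : R -> R -> R) (g : R -> R) :=
  (forall x y, g (x + y) = g x + g y) /\ (forall x y, g (mul x y) = mul (g x) (g y)).

Definition ore_endo (R : zmodType) (mul : R -> R -> R) (s d : R -> R) (G : opoly R -> opoly R) :=
  (forall p q, ocoef (G (oadd p q)) =1 ocoef (oadd (G p) (G q))) /\
  (forall p q, ocoef (G (omul mul s d p q)) =1 ocoef (omul mul s d (G p) (G q))).

(* Main.v *)
Require Import Defs.
From HB Require Import structures.
From mathcomp Require Import all_boot all_order all_algebra.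
Local Open Scope ring_scope.
Import GRing.Theory.

Lemma gamma0 (R : zmodType) (g : R -> R) : (forall x y, g (x + y) = g x + g y) -> g 0 = 0.
Proof. by move=> H; apply: (addrI (g 0)); rewrite -H !addr0. Qed.

Lemma ocoef_ext (R : zmodType) (g : R -> R) p k : g 0 = 0 -> ocoef (oext g p) k = g (ocoef p k).
Proof.
move=> g0; rewrite /ocoef /oext; case: (ltnP k (size p)) => hk; first by rewrite (nth_map 0).
by rewrite !nth_default ?size_map.
Qed.

Lemma ocoef_mkseq (R : zmodType) (f : nat -> R) n k : ocoef (mkseq f n) k = if (k < n)%N then f k else 0.
Proof.
rewrite /ocoef; case: ifP => hk; first by rewrite nth_mkseq.
by rewrite nth_default // size_mkseq leqNgt hk.
Qed.

Lemma opi0 (R : zmodType) s d m i (b : R) : (m < i)%N -> opi s d m i b = 0.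
Proof.
move=> h; rewrite /opi big_pred0 // => w; apply/negbTE/eqP => e.
have := count_size id w; rewrite e size_tuple leqNgt h //.
Qed.

Theorem mainTheorem1 (R : zmodType) (mul : R -> R -> R)
  (mulDl : forall x y z : R, mul (x + y) z = mul x z + mul y z)
  (mulDr : forall x y z : R, mul x (y + z) = mul x y + mul x z)
  (sigma delta gamma : R -> R)
  (hs : left_R_additive mul sigma) (hd : left_R_additive mul delta)
  (hg : ring_endo mul gamma) :
  ore_endo mul sigma delta (oext gamma) <->
  (forall (i m : nat) (a b : R),
     mul (gamma a) (opi sigma delta m i (gamma b)) = mul (gamma a) (gamma (opi sigma delta m i b))).
Proof.
case: hg => gD gM.
have g0 := @gamma0 R gamma gD.
have gS : forall I r (P : pred I) (F : I -> R),
    gamma (\sum_(i <- r | P i) F i) = \sum_(i <- r | P i) gamma (F i).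
  by move=> I r P F; apply: (big_morph _ gD g0).
have mul0l : forall x, mul 0 x = 0.
  by move=> x; apply: (addrI (mul 0 x)); rewrite -mulDl !addr0.
split.
- move=> [_ Hm] i m a b.
  case: (leqP i m) => him; last by rewrite !opi0 // g0.
  have := Hm (rcons (nseq m 0) a) [:: b] i.
  rewrite ocoef_ext // /omul !ocoef_mkseq /oext size_map size_rcons size_nseq /=.
  rewrite addn1 ltnS (leq_trans him) //.
  rewrite (big_ord_recr m) (big_ord_recr m) /= gD.
  rewrite [X in gamma X + _]big1 => [|j _]; last first.
    rewrite big1 // => n _; rewrite big1 // => k _.
    by rewrite /ocoef nth_rcons size_nseq ltn_ord nth_nseq ltn_ord mul0l.
  rewrite [X in _ = X + _ -> _]big1 => [|j _]; last first.
    rewrite big1 // => n _; rewrite big1 // => k _.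
    by rewrite /ocoef (nth_map 0) ?size_rcons ?size_nseq ?ltnS 1?ltnW // nth_rcons size_nseq ltn_ord nth_nseq ltn_ord g0 mul0l.
  rewrite !big_ord1 /= g0 !add0r.
  try rewrite !add0r.
  have P1 : (fun j : 'I_m.+1 => (j + 0)%N == i) =1 pred1 (Ordinal (him : (i < m.+1)%N)).
    by move=> j /=; rewrite addn0.
  rewrite !(big_pred1 _ P1) /=.
  rewrite /ocoef (nth_map 0) ?size_rcons ?size_nseq // !nth_rcons size_nseq ltnn eqxx /=.
  by rewrite gM.
- move=> H; split.
  + move=> p q k; rewrite ocoef_ext // /oadd /oext !size_map !ocoef_mkseq.
    case: ifP => _; last by rewrite g0.
    by rewrite gD -!(@ocoef_ext R gamma _ _ g0).
  + move=> p q k; rewrite ocoef_ext // /omul /oext !size_map !ocoef_mkseq.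
    case: ifP => _; last by rewrite g0.
    rewrite gS; apply: eq_bigr => m _; rewrite gS; apply: eq_bigr => n _.
    rewrite gS; apply: eq_bigr => j _.
    by rewrite gM -[in RHS]/(oext gamma p) -[in RHS]/(oext gamma q) !(@ocoef_ext R gamma _ _ g0) H.
Qed.
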